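(* Let $S=\{(x_1,x_2)\in\mathbb{R}^2:x_2^3-x_1^2\ge0\}$, so that $\overline{\mathrm{conv}(S)}=\{x_2\ge0\}$; let $\tilde S^{o}=\{(x_0,x_1,x_2):x_2^3-x_0x_1^2\ge0,\ x_0>0\}$ and $\tilde G=\{X_0,\ X_2^3-X_0X_1^2,\ X_0^2+X_1^2+X_2^2-1,\ 1-X_0^2-X_1^2-X_2^2\}$. Then $(0,\pm1,0)\in\overline{\tilde S^{o}}$, so $\mathrm{conv}(\overline{\tilde S^{o}})$ is not pointed, and $\widetilde{\mathrm{TH}}_k(\tilde G)=\mathbb{R}^2$ for every $k\ge1$; hence $\bigcap_k\widetilde{\mathrm{TH}}_k(\tilde G)\neq\overline{\mathrm{conv}(S)}$.
   Context: For a finite set $H$ of polynomials, $\mathcal{Q}_k(H)=\{\sum_{j}\sigma_jh_j:h_0=1,\ \sigma_j\text{ sums of squares},\ \deg(\sigma_jh_j)\le2k\}$. $\widetilde{\mathrm{TH}}_k(\tilde G)=\{(x_1,x_2):\tilde l(1,x_1,x_2)\ge0\ \forall\tilde l\in\mathcal{Q}_k(\tilde G)\text{ that is a linear form in }(X_0,X_1,X_2)\text{ or }0\}$. A closed convex cone $K$ is pointed if $K\cap(-K)=\{0\}$. *)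

(* Defs.v *)
(* Real numbers are modelled by an arbitrary real closed
   field R (rcfType); polynomials in X0,X1,X2 by nested univariate polynomials
   {poly {poly {poly R}}}: X0 = outer variable, X1 = middle, X2 = inner. *)
From HB Require Import structures.
From mathcomp Require Import all_boot all_order all_algebra.
Set Implicit Arguments. Unset Strict Implicit. Unset Printing Implicit Defensive.
Import Order.TTheory GRing.Theory Num.Theory.
Local Open Scope ring_scope.

Section Defs.
Variable R : rcfType.

Definition mpoly3 := {poly {poly {poly R}}}.
Definition PX0 : mpoly3 := 'X.
Definition PX1 : mpoly3 := ('X)%:P.
Definition PX2 : mpoly3 := ('X)%:P%:P.

Definition coef3 (p : mpoly3) (i j k : nat) : R := ((p`_i)`_j)`_k.

Definition ev3 (p : mpoly3) (a b c : R) : R :=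
  (map_poly (fun q : {poly {poly R}} =>
     (map_poly (fun r : {poly R} => r.[c]) q).[b]) p).[a].

Definition tdeg_le (p : mpoly3) (d : nat) : Prop :=
  forall i j k : nat, (d < i + j + k)%N -> coef3 p i j k = 0.

Definition is_sos (p : mpoly3) : Prop :=
  exists s : seq mpoly3, p = \sum_(q <- s) q ^+ 2.

(* truncated quadratic module Q_k(H), with h_0 = 1 prepended *)
Definition QM (H : seq mpoly3) (k : nat) (p : mpoly3) : Prop :=
  exists sig : 'I_(size H).+1 -> mpoly3,
    (forall j, is_sos (sig j) /\ tdeg_le (sig j * nth 0 (1 :: H) j) (2 * k)) /\
    p = \sum_(j < (size H).+1) sig j * nth 0 (1 :: H) j.

Definition is_linform (p : mpoly3) : Prop :=
  forall i j k : nat, (i + j + k != 1)%N -> coef3 p i j k = 0.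

Definition vec2 (a b : R) : 'rV[R]_2 := \row_(i < 2) nth 0 [:: a; b] i.
Definition vec3 (a b c : R) : 'rV[R]_3 := \row_(i < 3) nth 0 [:: a; b; c] i.

Definition THt (G : seq mpoly3) (k : nat) (x : 'rV[R]_2) : Prop :=
  forall l, QM G k l -> is_linform l ->
    0 <= ev3 l 1 (x ord0 (inord 0)) (x ord0 (inord 1)).

Definition clos n (A : 'rV[R]_n -> Prop) (x : 'rV[R]_n) : Prop :=
  forall e : R, 0 < e -> exists y, A y /\ forall i, `|y ord0 i - x ord0 i| < e.

Definition conv n (A : 'rV[R]_n -> Prop) (x : 'rV[R]_n) : Prop :=
  exists (m : nat) (w : 'I_m -> R) (p : 'I_m -> 'rV[R]_n),
    (forall i, 0 <= w i) /\ \sum_(i < m) w i = 1 /\ (forall i, A (p i)) /\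
    x = \sum_(i < m) w i *: p i.

Definition pointed n (K : 'rV[R]_n -> Prop) : Prop :=
  forall v, K v -> K (- v) -> v = 0.

Definition S_ex (x : 'rV[R]_2) : Prop :=
  0 <= (x ord0 (inord 1)) ^+ 3 - (x ord0 (inord 0)) ^+ 2.

Definition Sto_ex (x : 'rV[R]_3) : Prop :=
  0 <= (x ord0 (inord 2)) ^+ 3 - x ord0 (inord 0) * (x ord0 (inord 1)) ^+ 2 /\
  0 < x ord0 (inord 0).

Definition Gt_ex : seq mpoly3 :=
  [:: PX0; PX2 ^+ 3 - PX0 * PX1 ^+ 2;
      PX0 ^+ 2 + PX1 ^+ 2 + PX2 ^+ 2 - 1;
      1 - PX0 ^+ 2 - PX1 ^+ 2 - PX2 ^+ 2].

End Defs.

(* Main.v *)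
Require Import Defs.
From HB Require Import structures.
From mathcomp Require Import all_boot all_order all_algebra zify ring lra.
Import Order.TTheory GRing.Theory Num.Theory.
Local Open Scope ring_scope.
Section S.
Variable R : rcfType.
Notation P3 := (mpoly3 R).
Definition C3 (k : R) : P3 := k%:P%:P%:P.
Lemma linform_eq (l : P3) : is_linform l ->
  l = C3 (coef3 l 1 0 0) * PX0 R + C3 (coef3 l 0 1 0) * PX1 R + C3 (coef3 l 0 0 1) * PX2 R.
Proof.
move=> H; apply/polyP => i; apply/polyP => j; apply/polyP => k.
rewrite /C3 /PX0 /PX1 /PX2 !coefD !coefCM !coefC !coefX.
case: i => [|[|i]]; case: j => [|[|j]]; case: k => [|[|k]] /=;
 rewrite ?coefD ?coefCM ?coefC ?coefX /= ?mulr0 ?mulr1 ?addr0 ?add0r ?coefC ?coefX //=;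
 rewrite ?mulr0 ?mulr1 ?add0r ?addr0; try reflexivity; apply: H; lia.
Qed.

Definition F1 (a b c : R) : {rmorphism P3 -> R} :=
  (horner_eval a \o map_poly (horner_eval b \o map_poly (horner_eval c))).
Lemma ev3E p a b c : ev3 p a b c = F1 a b c p.
Proof. by []. Qed.
Lemma ev3_X0 a b c : F1 a b c (PX0 R) = a.
Proof. by rewrite /= /PX0 /PX1 /PX2 /C3 ?(map_polyC, map_polyX, horner_evalE, hornerC, hornerX) /= ?(map_polyC, map_polyX, horner_evalE, hornerC, hornerX) /= ?(map_polyC, map_polyX, horner_evalE, hornerC, hornerX) /= ?(map_polyC, map_polyX, horner_evalE, hornerC, hornerX). Qed.
Lemma ev3_X1 a b c : F1 a b c (PX1 R) = b.
Proof. by rewrite /= /PX0 /PX1 /PX2 /C3 ?(map_polyC, map_polyX, horner_evalE, hornerC, hornerX) /= ?(map_polyC, map_polyX, horner_evalE, hornerC, hornerX) /= ?(map_polyC, map_polyX, horner_evalE, hornerC, hornerX) /= ?(map_polyC, map_polyX, horner_evalE, hornerC, hornerX). Qed.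
Lemma ev3_X2 a b c : F1 a b c (PX2 R) = c.
Proof. by rewrite /= /PX0 /PX1 /PX2 /C3 ?(map_polyC, map_polyX, horner_evalE, hornerC, hornerX) /= ?(map_polyC, map_polyX, horner_evalE, hornerC, hornerX) /= ?(map_polyC, map_polyX, horner_evalE, hornerC, hornerX) /= ?(map_polyC, map_polyX, horner_evalE, hornerC, hornerX). Qed.
Lemma ev3_C a b c k : F1 a b c (C3 k) = k.
Proof. by rewrite /= /PX0 /PX1 /PX2 /C3 ?(map_polyC, map_polyX, horner_evalE, hornerC, hornerX) /= ?(map_polyC, map_polyX, horner_evalE, hornerC, hornerX) /= ?(map_polyC, map_polyX, horner_evalE, hornerC, hornerX) /= ?(map_polyC, map_polyX, horner_evalE, hornerC, hornerX). Qed.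

Definition phi (s : R) : {rmorphism P3 -> {poly R}} :=
  horner_eval 0 \o map_poly (horner_eval s%:P).
Lemma phi_X0 s : phi s (PX0 R) = 0.
Proof. by rewrite /= /PX0 /PX1 /PX2 /C3 ?(map_polyC, map_polyX, horner_evalE, hornerC, hornerX) /= ?(map_polyC, map_polyX, horner_evalE, hornerC, hornerX) /= ?(map_polyC, map_polyX, horner_evalE, hornerC, hornerX) /= ?(map_polyC, map_polyX, horner_evalE, hornerC, hornerX). Qed.
Lemma phi_X1 s : phi s (PX1 R) = s%:P.
Proof. by rewrite /= /PX0 /PX1 /PX2 /C3 ?(map_polyC, map_polyX, horner_evalE, hornerC, hornerX) /= ?(map_polyC, map_polyX, horner_evalE, hornerC, hornerX) /= ?(map_polyC, map_polyX, horner_evalE, hornerC, hornerX) /= ?(map_polyC, map_polyX, horner_evalE, hornerC, hornerX). Qed.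
Lemma phi_X2 s : phi s (PX2 R) = 'X.
Proof. by rewrite /= /PX0 /PX1 /PX2 /C3 ?(map_polyC, map_polyX, horner_evalE, hornerC, hornerX) /= ?(map_polyC, map_polyX, horner_evalE, hornerC, hornerX) /= ?(map_polyC, map_polyX, horner_evalE, hornerC, hornerX) /= ?(map_polyC, map_polyX, horner_evalE, hornerC, hornerX). Qed.
Lemma phi_C s k : phi s (C3 k) = k%:P.
Proof. by rewrite /= /PX0 /PX1 /PX2 /C3 ?(map_polyC, map_polyX, horner_evalE, hornerC, hornerX) /= ?(map_polyC, map_polyX, horner_evalE, hornerC, hornerX) /= ?(map_polyC, map_polyX, horner_evalE, hornerC, hornerX) /= ?(map_polyC, map_polyX, horner_evalE, hornerC, hornerX). Qed.

Lemma QM_nonneg (H : seq P3) k (p : P3) (a b c : R) : QM H k p ->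
  (forall j : 'I_(size H).+1, 0 <= ev3 (nth 0 (1 :: H) j) a b c) -> 0 <= ev3 p a b c.
Proof.
case=> sig [Hs ->] Hg; rewrite ev3E rmorph_sum; apply: sumr_ge0 => j _.
rewrite rmorphM -!ev3E; apply: mulr_ge0 => //.
case: (Hs j) => [[s ->] _]; rewrite ev3E rmorph_sum; apply: sumr_ge0 => q _.
by rewrite rmorphXn sqr_ge0.
Qed.

Arguments QM_nonneg {H k p a b c}.

Lemma Gt_nonneg a b c : 0 <= a -> 0 <= c ^+ 3 - a * b ^+ 2 -> a ^+ 2 + b ^+ 2 + c ^+ 2 = 1 ->
  forall j : 'I_(size (Gt_ex R)).+1, 0 <= ev3 (nth 0 (1 :: Gt_ex R) j) a b c.
Proof.
move=> ha hg hs [m Hm].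
have gen : forall X0 X1 X2 : P3, F1 a b c X0 = a -> F1 a b c X1 = b -> F1 a b c X2 = c ->
  [/\ 0 <= F1 a b c (X2 ^+ 3 - X0 * X1 ^+ 2),
      0 <= F1 a b c (X0 ^+ 2 + X1 ^+ 2 + X2 ^+ 2 - 1) &
      0 <= F1 a b c (1 - X0 ^+ 2 - X1 ^+ 2 - X2 ^+ 2)].
  move=> X0 X1 X2 h0 h1 h2.
  rewrite !(rmorphB, rmorphD, rmorphXn, rmorphM, rmorph1) h0 h1 h2.
  split => //; first by rewrite hs subrr.
  have -> : 1 - a ^+ 2 - b ^+ 2 - c ^+ 2 = 0 :> R by rewrite -hs; ring.
  by [].
have [g2 g3 g4] := gen _ _ _ (ev3_X0 a b c) (ev3_X1 a b c) (ev3_X2 a b c).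
case: m Hm => [|[|[|[|[|m]]]]] Hm; rewrite /Gt_ex /= ev3E //.
- by rewrite rmorph1.
- by rewrite ev3_X0.
Qed.

Lemma key_abs (A B : comNzRingType) (f : {rmorphism A -> B}) (s0 s1 s2 s3 s4 X0 X1 X2 : A) :
  f (s0 * 1 + (s1 * X0 + (s2 * (X2 ^+ 3 - X0 * X1 ^+ 2) +
     (s3 * (X0 ^+ 2 + X1 ^+ 2 + X2 ^+ 2 - 1) + (s4 * (1 - X0 ^+ 2 - X1 ^+ 2 - X2 ^+ 2) + 0)))))
  = f s0 * 1 + (f s1 * f X0 + (f s2 * (f X2 ^+ 3 - f X0 * f X1 ^+ 2) +
     (f s3 * (f X0 ^+ 2 + f X1 ^+ 2 + f X2 ^+ 2 - 1) + (f s4 * (1 - f X0 ^+ 2 - f X1 ^+ 2 - f X2 ^+ 2) + 0)))).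
Proof.
by rewrite !(rmorphB, rmorphD, rmorphXn, rmorphM, rmorph1, rmorph0).
Qed.

Lemma lin_abs (A B : comNzRingType) (f : {rmorphism A -> B}) (a b c X0 X1 X2 : A) :
  f (a * X0 + b * X1 + c * X2) = f a * f X0 + f b * f X1 + f c * f X2.
Proof. by rewrite !(rmorphD, rmorphM). Qed.

Lemma sq_coef (p : {poly R}) : (p ^+ 2)`_0 = p`_0 ^+ 2 /\ (p ^+ 2)`_1 = p`_0 * (p`_1 + p`_1).
Proof.
split; rewrite expr2 coefM.
  by rewrite big_ord1 /= expr2.
by rewrite big_ord_recr big_ord1 /= mulrDr [_`_1 * _]mulrC.
Qed.

Lemma sos_sum (T : Type) (s : seq T) (u v : T -> R) :
  \sum_(q <- s) u q ^+ 2 = 0 -> \sum_(q <- s) u q * v q = 0.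
Proof.
elim: s => [|x s IH]; first by rewrite !big_nil.
rewrite !big_cons => /eqP; rewrite paddr_eq0 ?sqr_ge0 //; last first.
  by apply: sumr_ge0 => q _; apply: sqr_ge0.
by case/andP; rewrite sqrf_eq0 => /eqP -> /eqP /IH ->; rewrite mul0r addr0.
Qed.

Lemma coef_trick (B C : R) (a p0 p1 p2 p3 p4 : {poly R}) :
  a * 0 + B%:P * 1 + C%:P * 'X = p0 * 1 + (p1 * 0 + (p2 * ('X ^+ 3 - 0 * 1 ^+ 2) +
    (p3 * (0 ^+ 2 + 1 ^+ 2 + 'X ^+ 2 - 1) + (p4 * (1 - 0 ^+ 2 - 1 ^+ 2 - 'X ^+ 2) + 0)))) ->
  B = p0`_0 /\ C = p0`_1.
Proof.
move=> E.
have : (B%:P + C%:P * 'X) - (p0 + (p2 * 'X + p3 - p4) * 'X ^+ 2) =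
  (a * 0 + B%:P * 1 + C%:P * 'X) - (p0 * 1 + (p1 * 0 + (p2 * ('X ^+ 3 - 0 * 1 ^+ 2) +
    (p3 * (0 ^+ 2 + 1 ^+ 2 + 'X ^+ 2 - 1) + (p4 * (1 - 0 ^+ 2 - 1 ^+ 2 - 'X ^+ 2) + 0))))) by ring.
rewrite E subrr => /eqP; rewrite subr_eq0 => /eqP E2.
have G0 := congr1 (fun p : {poly R} => p`_0) E2.
have G1 := congr1 (fun p : {poly R} => p`_1) E2.
move: G0 G1 => /=; rewrite !coefD !coefMXn /= !coefC !coefCM !coefX /= !addr0 mulr0 mulr1 addr0 add0r.
by [].
Qed.

Lemma part4 k x : THt (Gt_ex R) k x.
Proof.
move=> l Hq Hl.
set A := coef3 l 1 0 0; set B := coef3 l 0 1 0; set C := coef3 l 0 0 1.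
have Hev : forall a b c, ev3 l a b c = A * a + B * b + C * c.
  by move=> a b c; rewrite ev3E (linform_eq _ Hl) lin_abs !ev3_C ev3_X0 ev3_X1 ev3_X2.
have hA : 0 <= A.
  have := QM_nonneg Hq (@Gt_nonneg 1 0 0 ler01 _ _); rewrite Hev.
  rewrite mulr1 !mulr0 !addr0; apply.
    by rewrite ?sqrrN ?expr0n ?expr1n /= ?mul0r ?mulr0 ?mulr1 ?subrr ?addr0 ?add0r.
  by rewrite ?sqrrN ?expr0n ?expr1n /= ?mul0r ?mulr0 ?mulr1 ?subrr ?addr0 ?add0r.
have hB : B = 0.
  have e1 : (0:R) <= 0 ^+ 3 - 0 * 1 ^+ 2 by rewrite ?sqrrN ?expr0n ?expr1n /= ?mul0r ?mulr0 ?mulr1 ?subrr ?addr0 ?add0r.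
  have e2 : (0:R) <= 0 ^+ 3 - 0 * (-1) ^+ 2 by rewrite ?sqrrN ?expr0n ?expr1n /= ?mul0r ?mulr0 ?mulr1 ?subrr ?addr0 ?add0r.
  have e3 : (0:R) ^+ 2 + 1 ^+ 2 + 0 ^+ 2 = 1 by rewrite ?sqrrN ?expr0n ?expr1n /= ?mul0r ?mulr0 ?mulr1 ?subrr ?addr0 ?add0r.
  have e4 : (0:R) ^+ 2 + (-1) ^+ 2 + 0 ^+ 2 = 1 by rewrite ?sqrrN ?expr0n ?expr1n /= ?mul0r ?mulr0 ?mulr1 ?subrr ?addr0 ?add0r.
  have h1 := QM_nonneg Hq (@Gt_nonneg 0 1 0 (lexx 0) e1 e3).
  have h2 := QM_nonneg Hq (@Gt_nonneg 0 (-1) 0 (lexx 0) e2 e4).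
  move: h1 h2; rewrite !Hev !mulr0 !addr0 add0r mulr1 mulrN1 => h1 h2; lra.
have hC : C = 0.
  case: Hq => sig [Hs Heq].
  rewrite !big_ord_recl big_ord0 /Gt_ex /= in Heq.
  have E := congr1 (phi 1) Heq.
  rewrite key_abs {1}(linform_eq _ Hl) lin_abs !phi_C phi_X0 phi_X1 phi_X2 polyC1 in E.
  have [E0 E1] := coef_trick _ _ _ _ _ _ _ _ E.
  case: (Hs ord0) => [[s hs] _].
  move: E0 E1; rewrite hs rmorph_sum !coef_sum => E0 E1.
  have e0 : \sum_(q <- s) (phi 1 (q ^+ 2))`_0 = \sum_(q <- s) ((phi 1 q)`_0) ^+ 2.
    by apply: eq_bigr => q _; rewrite rmorphXn (sq_coef _).1.
  have e1 : \sum_(q <- s) (phi 1 (q ^+ 2))`_1 =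
     \sum_(q <- s) ((phi 1 q)`_0) * ((phi 1 q)`_1 + (phi 1 q)`_1).
    by apply: eq_bigr => q _; rewrite rmorphXn (sq_coef _).2.
  rewrite /C E1 e1; apply: sos_sum; by rewrite -e0 -E0.
by rewrite Hev hB hC !mul0r !addr0 mulr1.
Qed.

Lemma vec2_0 (a b : R) : vec2 a b ord0 (inord 0) = a.
Proof. by rewrite mxE inordK. Qed.
Lemma vec2_1 (a b : R) : vec2 a b ord0 (inord 1) = b.
Proof. by rewrite mxE inordK. Qed.
Lemma vec3_0 (a b c : R) : vec3 a b c ord0 (inord 0) = a.
Proof. by rewrite mxE inordK. Qed.
Lemma vec3_1 (a b c : R) : vec3 a b c ord0 (inord 1) = b.
Proof. by rewrite mxE inordK. Qed.
Lemma vec3_2 (a b c : R) : vec3 a b c ord0 (inord 2) = c.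
Proof. by rewrite mxE inordK. Qed.
Lemma ord2E (i : 'I_2) : i = inord 0 \/ i = inord 1.
Proof.
case: i => [[|[|m]] Hm]; [left|right|by []]; apply/val_inj; by rewrite /= inordK.
Qed.
Lemma ord3E (i : 'I_3) : [\/ i = inord 0, i = inord 1 | i = inord 2].
Proof.
case: i => [[|[|[|m]]] Hm]; [apply: Or31|apply: Or32|apply: Or33|by []];
  apply/val_inj; by rewrite /= inordK.
Qed.

Lemma scaleE (a : R) (M : 'rV[R]_2) i : (a *: M) ord0 i = a * M ord0 i.
Proof. by rewrite mxE. Qed.

Lemma oppE3 (M : 'rV[R]_3) i : (- M) ord0 i = - M ord0 i.
Proof. by rewrite mxE. Qed.

Lemma cube_ge0 (y : R) : 0 <= y ^+ 3 -> 0 <= y.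
Proof.
move=> h; rewrite leNgt; apply/negP => hy.
have e : y ^+ 3 = y * (y * y) by rewrite !exprS expr0 mulr1.
have p : 0 < y * y by rewrite nmulr_rgt0.
have : y * (y * y) < 0 by rewrite pmulr_llt0.
lra.
Qed.

Lemma part5a (x : 'rV[R]_2) : clos (conv (@S_ex R)) x -> 0 <= x ord0 (inord 1).
Proof.
move=> H; rewrite leNgt; apply/negP => hx.
have he : 0 < - x ord0 (inord 1) by rewrite oppr_gt0.
have [y [[m [w [p [hw [hs [hS ->]]]]]] hd]] := H _ he.
have hpos : 0 <= (\sum_(i < m) w i *: p i) ord0 (inord 1).
  rewrite summxE; apply: sumr_ge0 => i _; rewrite mxE; apply: mulr_ge0 => //.
  apply: cube_ge0; have := hS i; rewrite /S_ex.
  have := sqr_ge0 (p i ord0 (inord 0)); lra.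
have := hd (inord 1).
have := ler_norm ((\sum_(i < m) w i *: p i) ord0 (inord 1) - x ord0 (inord 1)).
lra.
Qed.

Lemma part5b (x : 'rV[R]_2) : 0 <= x ord0 (inord 1) -> clos (conv (@S_ex R)) x.
Proof.
move=> hx e he.
set X := x ord0 (inord 0).
set Y := x ord0 (inord 1) + e / 2.
have he2 : 0 < e / 2 by rewrite divr_gt0.
have hY : 0 < Y by rewrite /Y; lra.
have hY3 : 0 < Y ^+ 3 by rewrite exprn_gt0.
set D := Y ^+ 3 + X ^+ 2 + 1.
have hD : 0 < D by rewrite /D; have := sqr_ge0 X; lra.
set lam := Y ^+ 3 / D.
have hl0 : 0 <= lam by rewrite divr_ge0 // ltW.
have hl1 : lam <= 1 by rewrite /lam ler_pdivrMr // mul1r /D; have := sqr_ge0 X; lra.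
have hYn : Y != 0 by rewrite gt_eqF.
have hDn : D != 0 by rewrite gt_eqF.
exists (vec2 X Y); split.
  exists 2, (fun i : 'I_2 => if i == ord0 then 1 - lam else lam),
    (fun i : 'I_2 => if i == ord0 then vec2 0 0 else vec2 (X * D / Y ^+ 3) (D / Y ^+ 2)).
  split; first by move=> i; case: ifP => _; lra.
  split; first by rewrite big_ord_recr big_ord1 /= subrK.
  split.
    move=> i; case: ifP => _; rewrite /S_ex vec2_0 vec2_1.
      by rewrite ?expr0n /= ?subrr ?subr0.
    have -> : (D / Y ^+ 2) ^+ 3 - (X * D / Y ^+ 3) ^+ 2 = D ^+ 2 * (D - X ^+ 2) / Y ^+ 6.
      by field; rewrite hYn.
    apply: divr_ge0; last by rewrite exprn_ge0 // ltW.
    by apply: mulr_ge0; [apply: sqr_ge0 | rewrite /D; lra].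
  apply/rowP => i; rewrite summxE big_ord_recr big_ord1 /=.
  rewrite !scaleE.
  case: (ord2E i) => ->; rewrite ?vec2_0 ?vec2_1; rewrite /lam; field;
    by rewrite hYn hDn.
move=> i; case: (ord2E i) => ->; rewrite ?vec2_0 ?vec2_1.
  by rewrite subrr normr0.
rewrite /Y addrAC subrr add0r ger0_norm; last by rewrite divr_ge0 // ltW.
lra.
Qed.

Lemma clos_pt (t : R) : t ^+ 2 = 1 -> clos (@Sto_ex R) (vec3 0 t 0).
Proof.
move=> ht e he.
set c := e / (e + 2).
have hc0 : 0 < c by rewrite divr_gt0 //; lra.
have hc1 : c < 1 by rewrite /c ltr_pdivrMr; lra.
have hce : c < e by rewrite /c ltr_pdivrMr; nra.
have hc3 : c ^+ 3 < e by nra.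
exists (vec3 (c ^+ 3) t c); split.
  rewrite /Sto_ex vec3_0 vec3_1 vec3_2 ht mulr1 subrr; split => //.
  by rewrite exprn_gt0.
move=> i; case: (ord3E i) => ->; rewrite ?vec3_0 ?vec3_1 ?vec3_2.
- by rewrite subr0 ger0_norm // ltW // exprn_gt0.
- by rewrite subrr normr0.
- by rewrite subr0 ger0_norm // ltW.
Qed.

Lemma part3 : ~ pointed (conv (clos (@Sto_ex R))).
Proof.
have single : forall v, clos (@Sto_ex R) v -> conv (clos (@Sto_ex R)) v.
  move=> v hv; exists 1, (fun _ => 1), (fun _ => v).
  by rewrite big_ord1 big_ord1 scale1r.
move=> Hp.
have h1 := single _ (clos_pt 1 (expr1n _ _)).
have m1 : (-1 : R) ^+ 2 = 1 by rewrite sqrrN expr1n.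
have h2 := single _ (clos_pt (-1) m1).
have e : vec3 0 (-1) 0 = - vec3 0 1 0 :> 'rV[R]_3.
  apply/rowP => i; rewrite oppE3.
  by case: (ord3E i) => ->; rewrite ?vec3_0 ?vec3_1 ?vec3_2 ?oppr0.
rewrite e in h2.
have := Hp _ h1 h2 => /matrixP /(_ ord0 (inord 1)).
by rewrite vec3_1 mxE => /eqP; rewrite oner_eq0.
Qed.

End S.

Theorem mainTheorem19 (R : rcfType) :
  clos (@Sto_ex R) (vec3 0 1 0) /\
  clos (@Sto_ex R) (vec3 0 (-1) 0) /\
  ~ pointed (conv (clos (@Sto_ex R))) /\
  (forall k : nat, (1 <= k)%N -> forall x : 'rV[R]_2, THt (Gt_ex R) k x) /\
  (forall x : 'rV[R]_2, clos (conv (@S_ex R)) x <-> 0 <= x ord0 (inord 1)) /\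
  ~ (forall x : 'rV[R]_2,
       (forall k : nat, (1 <= k)%N -> THt (Gt_ex R) k x) <->
       clos (conv (@S_ex R)) x).
Proof.
split; first exact: clos_pt 1 (expr1n _ _).
split; first by apply: clos_pt; rewrite sqrrN expr1n.
split; first exact: part3.
split; first by move=> k _ x; apply: part4.
split; first by move=> x; split; [apply: part5a | apply: part5b].
move=> H.
have := @part5a R _ (proj1 (H (vec2 0 (-1))) (fun k _ => part4 _ _ _)).
rewrite vec2_1; lra.
Qed.
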